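(* Let $R$ be a unital semiprime left Goldie ring, $X$ a nonempty set, and for each $x\in X$ let $\sigma_x$ be a ring automorphism of $R$ and $\delta_x$ a $\sigma_x$-derivation of $R$; let $S=R[X;\mathscr{G},\mathscr{D}]$ be the free skew extension with $\mathscr{G}=\{\sigma_x\}$, $\mathscr{D}=\{\delta_x\}$. Fix a linear order on $X$ and extend it to $\langle X\rangle$ as described in the context. Let $A$ be a nonzero ideal of $S$ and let $I$ be the additive subgroup of $R$ generated by the leading coefficients of the nonzero elements of $A$. Then (1) $I$ is a two-sided ideal of $R$; (2) $\sigma_x(I)\subseteq I$ for every $x\in X$; (3) if $M=\mathrm{ann}_R(I)$, then $\sigma_x(M)=M$ and $\delta_x(M)\subseteq M$ for every $x\in X$.
   Context: A $\sigma$-derivation is an additive map $\delta\colon R\to R$ with $\delta(ab)=\delta(a)b+\sigma(a)\delta(b)$. Let $\langle X\rangle$ be the free monoid on $X$. A free skew extension $S=R[X;\mathscr{G},\mathscr{D}]$ is a ring containing $R$ as a subring and $X$ as a subset, which is a free left $R$-module with basis $\langle X\rangle$, and in which $xr=\sigma_x(r)x+\delta_x(r)$ for all $x\in X$, $r\in R$. Given a linear order $\prec$ on $X$, extend it to $\langle X\rangle$ by: $x_{i_1}\cdots x_{i_k}\prec x_{j_1}\cdots x_{j_l}$ iff $k<l$, or $k=l$ and at the first position $s$ where $i_s\ne j_s$ one has $x_{i_s}\prec x_{j_s}$. Each nonzero $f=\sum_\Delta r_\Delta\Delta\in S$ ($r_\Delta\in R$, almost all zero) has leading term the largest $\Delta$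 with $r_\Delta\neq0$, and its coefficient is the leading coefficient of $f$. $\mathrm{ann}_R(I)=\{r\in R\mid rI=Ir=0\}$. A ring is left Goldie if it has no infinite direct sum of nonzero left ideals and has ACC on left annihilators. *)

(* Defs.v *)
From HB Require Import structures.
From mathcomp Require Import all_boot all_order all_algebra.
Set Implicit Arguments. Unset Strict Implicit. Unset Printing Implicit Defensive.
Import Order.TTheory GRing.Theory.
Local Open Scope ring_scope.

Definition is_left_ideal (R : pzRingType) (L : R -> Prop) : Prop :=
  [/\ L 0, (forall a b, L a -> L b -> L (a - b)) & (forall r a, L a -> L (r * a))].

Definition is_ideal (R : pzRingType) (J : R -> Prop) : Prop :=
  [/\ J 0, (forall a b, J a -> J b -> J (a - b)),
      (forall r a, J a -> J (r * a)) & (forall r a, J a -> J (a * r))].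

(* J is nilpotent: J^n = 0 for some n, i.e. every product of n elements of J vanishes *)
Definition nilpotent_set (R : pzRingType) (J : R -> Prop) : Prop :=
  exists n : nat, forall l : seq R, size l = n -> (forall a, a \in l -> J a) ->
    \prod_(a <- l) a = 0.

Definition semiprime (R : pzRingType) : Prop :=
  forall J : R -> Prop, is_ideal J -> nilpotent_set J -> forall a, J a -> a = 0.

Definition lann (R : pzRingType) (T : R -> Prop) : R -> Prop :=
  fun r => forall t, T t -> r * t = 0.

Definition independent_family (R : pzRingType) (L : nat -> R -> Prop) : Prop :=
  forall (n : nat) (a : nat -> R), (forall i, (i < n)%N -> L i (a i)) ->
    \sum_(i < n) a i = 0 -> forall i, (i < n)%N -> a i = 0.

Definition left_Goldie (R : pzRingType) : Prop :=
  (~ exists L : nat -> R -> Prop,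
       (forall i, is_left_ideal (L i)) /\ (forall i, exists a, L i a /\ a <> 0) /\
       independent_family L) /\
  (forall T : nat -> R -> Prop,
     (forall n r, lann (T n) r -> lann (T n.+1) r) ->
     exists N, forall n, (N <= n)%N -> forall r, lann (T n) r <-> lann (T N) r).

Definition sigma_derivation (R : pzRingType) (sigma : R -> R) (delta : R -> R) : Prop :=
  (forall a b, delta (a + b) = delta a + delta b) /\
  (forall a b, delta (a * b) = delta a * b + sigma a * delta b).

Fixpoint lex_lt (d : Order.disp_t) (X : orderType d) (u v : seq X) : bool :=
  match u, v with
  | x :: u', y :: v' => ((x < y)%O) || ((x == y) && lex_lt u' v')
  | _, _ => false
  end.

Definition deglex_lt (d : Order.disp_t) (X : orderType d) (u v : seq X) : bool :=
  (size u < size v)%N || ((size u == size v) && lex_lt u v).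

Definition word (d : Order.disp_t) (X : orderType d) (S : pzRingType) (xv : X -> S)
  (w : seq X) : S := \prod_(x <- w) xv x.

Definition free_basis (d : Order.disp_t) (X : orderType d) (R S : pzRingType)
  (iota : R -> S) (xv : X -> S) : Prop :=
  (forall f : S, exists (s : seq (seq X)) (c : seq X -> R),
      uniq s /\ f = \sum_(w <- s) iota (c w) * word xv w) /\
  (forall (s : seq (seq X)) (c : seq X -> R), uniq s ->
      \sum_(w <- s) iota (c w) * word xv w = 0 -> forall w, w \in s -> c w = 0).

Definition is_lead_coef (d : Order.disp_t) (X : orderType d) (R S : pzRingType)
  (iota : R -> S) (xv : X -> S) (f : S) (r : R) : Prop :=
  exists (s : seq (seq X)) (c : seq X -> R) (w0 : seq X),
    [/\ uniq s, f = \sum_(w <- s) iota (c w) * word xv w, w0 \in s, c w0 = r &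
        r != 0 /\ forall w, w \in s -> w != w0 -> c w != 0 -> deglex_lt w w0].

Inductive add_gen (R : pzRingType) (P : R -> Prop) : R -> Prop :=
  | add_gen_base r : P r -> add_gen P r
  | add_gen_0 : add_gen P 0
  | add_gen_sub a b : add_gen P a -> add_gen P b -> add_gen P (a - b).

Definition ann (R : pzRingType) (I : R -> Prop) : R -> Prop :=
  fun r => forall i, I i -> r * i = 0 /\ i * r = 0.

(* Main.v *)
Require Import Defs.
From HB Require Import structures.
From mathcomp Require Import all_boot all_order all_algebra.
Import Order.TTheory GRing.Theory.
Local Open Scope ring_scope.
Set Implicit Arguments. Unset Strict Implicit. Unset Printing Implicit Defensive.

Section Ord.
Variables (d : Order.disp_t) (X : orderType d).
Implicit Types u v w : seq X.

Lemma lex_irr u : ~~ lex_lt u u.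
Proof. by elim: u => //= x u IH; rewrite ltxx eqxx /= IH. Qed.

Lemma lex_trans u v w : lex_lt u v -> lex_lt v w -> lex_lt u w.
Proof.
elim: u v w => [|x u IH] [|y v] [|z w] //=.
move=> /orP[xy|/andP[/eqP<- uv]] /orP[yz|/andP[/eqP<- vw]].
- by rewrite (lt_trans xy yz).
- by rewrite xy.
- by rewrite yz.
- by rewrite eqxx (IH _ _ uv vw) orbT.
Qed.

Lemma lex_total u v : size u = size v -> u != v -> lex_lt u v || lex_lt v u.
Proof.
elim: u v => [|x u IH] [|y v] //= [hs] ne.
case: (ltgtP x y) => [xy|yx|exy] //=.
apply: IH => //.
by move: ne; rewrite exy eqseq_cons eqxx.
Qed.

Lemma dl_irr u : ~~ deglex_lt u u.
Proof. by rewrite /deglex_lt ltnn eqxx lex_irr. Qed.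

Lemma dl_size u v : deglex_lt u v -> (size u <= size v)%N.
Proof. by case/orP=> [/ltnW|/andP[/eqP-> _]]. Qed.

Lemma dl_of_size u v : (size u < size v)%N -> deglex_lt u v.
Proof. by rewrite /deglex_lt => ->. Qed.

Lemma dl_trans u v w : deglex_lt u v -> deglex_lt v w -> deglex_lt u w.
Proof.
rewrite /deglex_lt => /orP[h1|/andP[/eqP e1 l1]] /orP[h2|/andP[/eqP e2 l2]].
- by rewrite (ltn_trans h1 h2).
- by rewrite -e2 h1.
- by rewrite e1 h2.
- by rewrite e1 e2 eqxx (lex_trans l1 l2) orbT.
Qed.

Lemma dl_total u v : u != v -> deglex_lt u v || deglex_lt v u.
Proof.
move=> ne; rewrite /deglex_lt.
case: (ltngtP (size u) (size v)) => // e /=.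
by apply: lex_total.
Qed.

Lemma dl_cons x v w : deglex_lt v w -> deglex_lt (x :: v) (x :: w).
Proof.
rewrite /deglex_lt /= ltnS eqSS => /orP[h|/andP[h l]]; first by rewrite h.
by rewrite h eqxx l !orbT.
Qed.

Lemma dl_max (l : seq (seq X)) : l != [::] ->
  exists2 w0, w0 \in l & forall w, w \in l -> w != w0 -> deglex_lt w w0.
Proof.
elim: l => [|a l IH] // _.
case: (eqVneq l [::]) => [->|ne].
  exists a; first by rewrite inE.
  by move=> w; rewrite inE => /eqP ->; rewrite eqxx.
have [m ml hm] := IH ne.
case: (eqVneq a m) => [am|am].
  exists m; first by rewrite inE ml orbT.
  by move=> w; rewrite inE => /orP[/eqP->|]; [rewrite am eqxx|exact: hm].
case/orP: (dl_total am) => h.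
  exists m; first by rewrite inE ml orbT.
  by move=> w; rewrite inE => /orP[/eqP->|] //; exact: hm.
exists a; first by rewrite inE eqxx.
move=> w; rewrite inE => /orP[/eqP->|wl]; first by rewrite eqxx.
move=> wa; case: (eqVneq w m) => [->//|wm].
exact: dl_trans (hm w wl wm) h.
Qed.
End Ord.

Section Semi.
Variable R : pzRingType.
Hypothesis hsp : semiprime R.

Lemma sp_l (J : R -> Prop) : is_ideal J -> forall a, J a ->
  (forall j, J j -> a * j = 0) -> a = 0.
Proof.
move=> [J0 JB Jl Jr] a Ja ha.
pose K b := J b /\ forall j, J j -> b * j = 0.
have: is_ideal K.
  split.
  - by split=> // j _; rewrite mul0r.
  - move=> x y [Jx hx] [Jy hy]; split; first exact: JB.
    by move=> j Jj; rewrite mulrBl hx ?hy // subr0.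
  - move=> r x [Jx hx]; split; first exact: Jl.
    by move=> j Jj; rewrite -mulrA hx ?mulr0.
  - move=> r x [Jx hx]; split; first exact: Jr.
    by move=> j Jj; rewrite -mulrA hx //; apply: Jl.
move=> KI; apply: (hsp KI) => //; exists 2%N.
case=> [|x [|y [|]]] //= _ hl.
rewrite !big_cons big_nil mulr1.
have [_ hx] := hl x (mem_head _ _).
have [Jy _] : K y by apply: hl; rewrite !inE eqxx orbT.
exact: hx.
Qed.

Lemma sp_r (J : R -> Prop) : is_ideal J -> forall a, J a ->
  (forall j, J j -> j * a = 0) -> a = 0.
Proof.
move=> [J0 JB Jl Jr] a Ja ha.
pose K b := J b /\ forall j, J j -> j * b = 0.
have: is_ideal K.
  split.
  - by split=> // j _; rewrite mulr0.
  - move=> x y [Jx hx] [Jy hy]; split; first exact: JB.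
    by move=> j Jj; rewrite mulrBr hx ?hy // subr0.
  - move=> r x [Jx hx]; split; first exact: Jl.
    by move=> j Jj; rewrite mulrA hx //; apply: Jr.
  - move=> r x [Jx hx]; split; first exact: Jr.
    by move=> j Jj; rewrite mulrA hx ?mul0r.
move=> KI; apply: (hsp KI) => //; exists 2%N.
case=> [|x [|y [|]]] //= _ hl.
rewrite !big_cons big_nil mulr1.
have [Jx _] := hl x (mem_head _ _).
have [_ hy] : K y by apply: hl; rewrite !inE eqxx orbT.
exact: hy.
Qed.

Lemma sp_lr (J : R -> Prop) : is_ideal J -> forall x,
  (forall j, J j -> x * j = 0) -> forall j, J j -> j * x = 0.
Proof.
move=> JI x hx j Jj; have [J0 JB Jl Jr] := JI.
apply: (sp_l JI); first exact: Jr.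
by move=> k Jk; rewrite -mulrA hx ?mulr0.
Qed.

Lemma sp_rl (J : R -> Prop) : is_ideal J -> forall x,
  (forall j, J j -> j * x = 0) -> forall j, J j -> x * j = 0.
Proof.
move=> JI x hx j Jj; have [J0 JB Jl Jr] := JI.
apply: (sp_r JI); first exact: Jl.
by move=> k Jk; rewrite mulrA hx ?mul0r.
Qed.
End Semi.

Section Skew.
Variables (R : pzRingType) (d : Order.disp_t) (X : orderType d) (S : pzRingType).
Variable iota : {rmorphism R -> S}.
Variable xv : X -> S.
Variable sigma : X -> {rmorphism R -> R}.
Variable delta : X -> R -> R.
Hypothesis hcomm : forall x r,
  xv x * iota r = iota (sigma x r) * xv x + iota (delta x r).

Local Notation wd := (word xv).

Lemma word_nil : wd [::] = 1. Proof. by rewrite /word big_nil. Qed.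
Lemma word_cons x w : wd (x :: w) = xv x * wd w.
Proof. by rewrite /word big_cons. Qed.

Definition Comb (P : seq X -> Prop) (g : S) :=
  exists t : seq (seq X * R),
    g = \sum_(p <- t) iota p.2 * wd p.1 /\ forall p, p \in t -> P p.1.

Lemma comb0 P : Comb P 0.
Proof. by exists [::]; rewrite big_nil. Qed.

Lemma combD P g h : Comb P g -> Comb P h -> Comb P (g + h).
Proof.
move=> [t1 [-> h1]] [t2 [-> h2]]; exists (t1 ++ t2); rewrite big_cat.
by split=> // p; rewrite mem_cat => /orP[]; auto.
Qed.

Lemma comb1 P v e : P v -> Comb P (iota e * wd v).
Proof.
move=> Pv; exists [:: (v, e)]; rewrite big_seq1; split=> // p.
by rewrite inE => /eqP ->.
Qed.

Lemma combW P Q g : (forall v, P v -> Q v) -> Comb P g -> Comb Q g.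
Proof. by move=> hPQ [t [-> h]]; exists t; split=> // p /h /hPQ. Qed.

Lemma combMl P r g : Comb P g -> Comb P (iota r * g).
Proof.
move=> [t [-> h]]; exists [seq (p.1, r * p.2) | p <- t].
rewrite big_map mulr_sumr; split.
  by apply: eq_bigr => p _; rewrite rmorphM mulrA.
by move=> p /mapP [q qt e]; rewrite e; exact: h qt.
Qed.

Lemma comb_sum (I : eqType) P (l : seq I) (Q : pred I) F :
  (forall i, i \in l -> Q i -> Comb P (F i)) ->
  Comb P (\sum_(i <- l | Q i) F i).
Proof.
elim: l => [|i l IH] h; first by rewrite big_nil; apply: comb0.
have h' : forall j, j \in l -> Q j -> Comb P (F j).
  by move=> j jl; apply: h; rewrite inE jl orbT.
rewrite big_cons; case: ifP => Qi; last exact: IH.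
by apply: combD; [apply: h; rewrite ?mem_head | apply: IH].
Qed.

Lemma combXl P Q x g : Comb P g -> (forall v, P v -> Q (x :: v) /\ Q v) ->
  Comb Q (xv x * g).
Proof.
move=> [t [-> h]] hq; rewrite mulr_sumr; apply: comb_sum => p pt _.
rewrite mulrA hcomm mulrDl -mulrA -word_cons.
have [q1 q2] := hq _ (h p pt).
by apply: combD; apply: comb1.
Qed.

Definition sw (w : seq X) (r : R) : R := foldr (fun x acc => sigma x acc) r w.

Lemma expand w r : exists g, wd w * iota r = iota (sw w r) * wd w + g /\
  Comb (fun v => (size v < size w)%N) g.
Proof.
elim: w r => [|x w IH] r.
  exists 0; rewrite word_nil mul1r mulr1 addr0; split=> //; exact: comb0.
have [g [e hg]] := IH r.
exists (iota (delta x (sw w r)) * wd w + xv x * g); split.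
  rewrite word_cons -mulrA e mulrDr mulrA hcomm mulrDl.
  by rewrite -[iota (sigma x _) * xv x * wd w]mulrA -word_cons /= addrA.
apply: combD.
  by apply: comb1 => /=.
apply: combXl hg _ => v hv /=; split=> //.
exact: ltnW.
Qed.

Lemma combMr P Q r g : Comb P g ->
  (forall v u, P v -> (u = v \/ (size u < size v)%N) -> Q u) ->
  Comb Q (g * iota r).
Proof.
move=> [t [-> h]] hq; rewrite mulr_suml; apply: comb_sum => p pt _.
have [g' [e hg']] := expand p.1 r.
rewrite -mulrA e mulrDr mulrA -rmorphM; apply: combD.
  by apply: comb1; apply: (hq p.1); [exact: h | left].
apply: combMl; apply: combW hg' => u hu; apply: (hq p.1); [exact: h | by right].
Qed.

Definition LD f a w0 := a != 0 /\ exists g, f = iota a * wd w0 + g /\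
  Comb (fun v => deglex_lt v w0) g.

Lemma lead_LD f a : is_lead_coef iota xv f a -> exists w0, LD f a w0.
Proof.
move=> [s [c [w0 [us -> w0s <- [a0 hlt]]]]]; exists w0; split=> //.
exists (\sum_(w <- s | w != w0) iota (c w) * wd w); split.
  by rewrite (bigD1_seq w0).
apply: comb_sum => w ws ww0; case: (eqVneq (c w) 0) => [->|cw0].
  by rewrite rmorph0 mul0r; apply: comb0.
by apply: comb1; apply: hlt.
Qed.

Lemma normalize (t : seq (seq X * R)) (U : seq (seq X)) : uniq U ->
  {subset map fst t <= U} ->
  \sum_(p <- t) iota p.2 * wd p.1 =
  \sum_(w <- U) iota (\sum_(p <- t | p.1 == w) p.2) * wd w.
Proof.
elim: t => [|p t IH] uU sub.
  by rewrite big_nil big1 // => w _; rewrite big_nil rmorph0 mul0r.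
rewrite big_cons IH //; last by move=> w wt; apply: sub; rewrite /= inE wt orbT.
have pU : p.1 \in U by apply: sub; rewrite /= mem_head.
have key := fun F => @bigD1_seq S +%R 0 (seq X) U p.1 F pU uU.
rewrite !key /= big_cons eqxx rmorphD mulrDl -addrA; congr (_ + (_ + _)).
apply: eq_bigr => w wp; rewrite big_cons.
by rewrite eq_sym (negbTE wp).
Qed.

Lemma LD_lead f a w0 : LD f a w0 -> is_lead_coef iota xv f a.
Proof.
move=> [a0 [g [-> [t [-> ht]]]]].
set U := undup (map fst t).
have uU : uniq U := undup_uniq _.
have w0U : w0 \notin U.
  apply/negP; rewrite mem_undup => /mapP [p pt e].
  by move: (ht p pt); rewrite -e (negbTE (dl_irr _)).
exists (w0 :: U), (fun w => if w == w0 then a else \sum_(p <- t | p.1 == w) p.2), w0.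
rewrite (@normalize t U) //; last by move=> w wt; rewrite mem_undup.
split.
- by rewrite /= w0U uU.
- rewrite big_cons eqxx; congr (_ + _); apply: eq_big_seq => w wU.
  have ww0 : w != w0 by apply/eqP => e; rewrite -e wU in w0U.
  by rewrite (negbTE ww0).
- by rewrite mem_head.
- by rewrite eqxx.
- split=> // w; rewrite inE => /orP[/eqP->|wU]; first by rewrite eqxx.
  move=> _ _; move: wU; rewrite mem_undup => /mapP[p pt ->]; exact: ht.
Qed.

Lemma LD_mull f a w0 r : LD f a w0 -> r * a != 0 -> LD (iota r * f) (r * a) w0.
Proof.
move=> [_ [g [-> hg]]] ra; split=> //; exists (iota r * g); split.
  by rewrite mulrDr mulrA rmorphM.
exact: combMl.
Qed.

Lemma LD_mulr f a w0 r : LD f a w0 -> a * sw w0 r != 0 ->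
  LD (f * iota r) (a * sw w0 r) w0.
Proof.
move=> [_ [g [-> hg]]] ar; split=> //.
have [g' [e hg']] := expand w0 r.
exists (iota a * g' + g * iota r); split.
  by rewrite mulrDl -mulrA e mulrDr mulrA -rmorphM addrA.
apply: combD.
  by apply: combMl; apply: combW hg' => v hv; exact: dl_of_size.
apply: combMr hg _ => v u hv [->//|hu]; apply: dl_of_size.
exact: leq_trans hu (dl_size hv).
Qed.

Lemma LD_X f a w0 x : LD f a w0 -> sigma x a != 0 ->
  LD (xv x * f) (sigma x a) (x :: w0).
Proof.
move=> [_ [g [-> hg]]] sa; split=> //.
exists (iota (delta x a) * wd w0 + xv x * g); split.
  by rewrite mulrDr mulrA hcomm mulrDl -mulrA -word_cons addrA.
apply: combD.
  by apply: comb1; apply: dl_of_size => /=.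
apply: combXl hg _ => v hv; split; first exact: dl_cons.
by apply: dl_of_size => /=; rewrite ltnS dl_size.
Qed.

End Skew.

Lemma iter_mul (R : pzRingType) (s : {rmorphism R -> R}) n a b :
  iter n s (a * b) = iter n s a * iter n s b.
Proof. by elim: n => //= n ->; rewrite rmorphM. Qed.

Lemma iter_0 (R : pzRingType) (s : {rmorphism R -> R}) n : iter n s 0 = 0.
Proof. by elim: n => //= n ->; rewrite rmorph0. Qed.

Lemma iter_surj (R : pzRingType) (s : {rmorphism R -> R}) n :
  bijective s -> forall y, exists z, iter n s z = y.
Proof.
move=> [g sg gs]; elim: n => [|n IH] y; first by exists y.
have [z hz] := IH (g y); exists z; by rewrite iterS hz gs.
Qed.

Lemma iter_inj0 (R : pzRingType) (s : {rmorphism R -> R}) n :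
  bijective s -> forall z, iter n s z = 0 -> z = 0.
Proof.
move=> bs; elim: n => [|n IH] z //= e; apply: IH.
apply: (bij_inj bs); by rewrite e rmorph0.
Qed.

Lemma sw_surj (R : pzRingType) (d : Order.disp_t) (X : orderType d)
  (sigma : X -> {rmorphism R -> R}) (hsig : forall x, bijective (sigma x)) w r :
  exists r', sw sigma w r' = r.
Proof.
elim: w r => [|x w IH] r; first by exists r.
have [g _ gK] := hsig x; have [r' e] := IH (g r); exists r'.
by rewrite /= e gK.
Qed.

Unset Implicit Arguments.
Set Strict Implicit.

Theorem proposition2
  (R : pzRingType) (hsp : semiprime R) (hgo : left_Goldie R)
  (d : Order.disp_t) (X : orderType d) (hX : inhabited X)
  (sigma : X -> {rmorphism R -> R}) (hsig : forall x, bijective (sigma x))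
  (delta : X -> R -> R) (hdel : forall x, sigma_derivation (sigma x) (delta x))
  (S : pzRingType) (iota : {rmorphism R -> S}) (hiota : injective iota)
  (xv : X -> S) (hfree : free_basis iota xv)
  (hcomm : forall (x : X) (r : R),
      xv x * iota r = iota (sigma x r) * xv x + iota (delta x r))
  (A : S -> Prop) (hA : is_ideal A) (hA0 : exists a, A a /\ a <> 0) :
  let I := add_gen (fun r => exists2 f, A f & is_lead_coef iota xv f r) in
  let M := ann I in
  [/\ is_ideal I,
      (forall x r, I r -> I (sigma x r)) &
      (forall x, (forall y, M y <-> exists2 r, M r & y = sigma x r) /\
                 (forall r, M r -> M (delta x r)))].
Proof.
move=> I M.
have [A0 AB Al Ar] := hA.
have Ileft : forall r a, I a -> I (r * a).
  move=> r a; elim => [{}a [f Af la]| |a1 a2 _ IH1 _ IH2].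
  - have [w0 ld] := lead_LD la.
    case: (eqVneq (r * a) 0) => [->|ra]; first exact: add_gen_0.
    apply: add_gen_base; exists (iota r * f); first exact: Al.
    exact: LD_lead (LD_mull ld ra).
  - by rewrite mulr0; apply: add_gen_0.
  - by rewrite mulrBr; apply: add_gen_sub.
have Iright : forall r a, I a -> I (a * r).
  move=> r a; elim => [{}a [f Af la]| |a1 a2 _ IH1 _ IH2].
  - have [w0 ld] := lead_LD la.
    have [r' e] := sw_surj hsig w0 r.
    case: (eqVneq (a * r) 0) => [->|ra]; first exact: add_gen_0.
    apply: add_gen_base; exists (f * iota r'); first exact: Ar.
    by rewrite -e in ra *; exact: LD_lead (LD_mulr hcomm ld ra).
  - by rewrite mul0r; apply: add_gen_0.
  - by rewrite mulrBl; apply: add_gen_sub.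
have II : is_ideal I.
  split; [exact: add_gen_0 | move=> a b; exact: add_gen_sub | exact: Ileft | exact: Iright].
have sig0 : forall x a, sigma x a = 0 -> a = 0.
  by move=> x a e; apply: (bij_inj (hsig x)); rewrite e rmorph0.
have Isig : forall x r, I r -> I (sigma x r).
  move=> x r; elim => [{}a [f Af la]| |a1 a2 _ IH1 _ IH2].
  - have [w0 ld] := lead_LD la.
    have sa : sigma x a != 0.
      by apply/eqP => /sig0 a0; move: ld => [/eqP].
    apply: add_gen_base; exists (xv x * f); first exact: Al.
    exact: LD_lead (LD_X hcomm ld sa).
  - by rewrite rmorph0; apply: add_gen_0.
  - by rewrite rmorphB; apply: add_gen_sub.
split => // x.
have Mdown : forall y, M (sigma x y) -> M y.
  move=> y My i Ii; have [h1 h2] := My _ (Isig x i Ii).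
  by split; apply: (sig0 x); rewrite rmorphM.
have Mright : forall m r, M m -> M (m * r).
  move=> m r Mm i Ii; split.
    by rewrite -mulrA; have [-> _] := Mm _ (Ileft r i Ii).
  by rewrite mulrA; have [_ ->] := Mm _ Ii; rewrite mul0r.
have MI0 : forall m, M m -> I m -> m = 0.
  move=> m Mm Im; apply: (sp_l hsp II Im) => j Ij; by have [] := Mm _ Ij.
pose Mn n y := M (iter n (sigma x) y).
have Mn_char : forall n y, Mn n y <-> (forall t, lann (Mn n) t -> t * y = 0).
  move=> n y; split; first by move=> hy t ht; apply: ht.
  move=> hy i Ii.
  have [j ej] := @iter_surj _ _ n (hsig x) i.
  have lj : lann (Mn n) j.
    move=> z hz; apply: (@iter_inj0 _ _ n (hsig x)).
    by rewrite iter_mul ej; have [_ ->] := hz _ Ii.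
  have hi : forall i, I i -> i * iter n (sigma x) y = 0.
    move=> i' Ii'; have [j' ej'] := @iter_surj _ _ n (hsig x) i'.
    have lj' : lann (Mn n) j'.
      move=> z hz; apply: (@iter_inj0 _ _ n (hsig x)).
      by rewrite iter_mul ej'; have [_ ->] := hz _ Ii'.
    by rewrite -ej' -iter_mul hy // iter_0.
  split; last exact: hi.
  exact: (sp_rl hsp II hi).
have [N hN] : exists N, forall n, (N <= n)%N -> forall r, lann (Mn n) r <-> lann (Mn N) r.
  apply: hgo.2 => n r hr z hz; apply: hr; apply: Mdown.
  by rewrite /Mn -iterS.
have Mup : forall r, M r -> M (sigma x r).
  move=> r Mr.
  have [z ez] := @iter_surj _ _ N (hsig x) r.
  have : Mn N.+1 z.
    apply/Mn_char => t ht; have ht' := (hN N.+1 (leqnSn N) t).1 ht.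
    by apply: ht'; rewrite /Mn ez.
  by rewrite /Mn iterS ez.
split.
  move=> y; split.
    move=> My; have [g sg gs] := hsig x; exists (g y); last by rewrite gs.
    by apply: Mdown; rewrite gs.
  by move=> [r Mr ->]; apply: Mup.
have kill : forall m, M m -> forall f, A f -> iota m * f = 0.
  move=> m Mm f Af.
  have [s [c [us ef]]] := hfree.1 f.
  suff hz : forall w, w \in s -> m * c w = 0.
    rewrite ef mulr_sumr big1_seq // => w /andP[_ /hz].
    by rewrite mulrA -rmorphM => ->; rewrite rmorph0 mul0r.
  move=> w ws; apply/eqP; apply/negPn/negP => hw.
  pose Nl := [seq w <- s | m * c w != 0].
  have : Nl != [::].
    apply/eqP => e; have : w \in Nl by rewrite mem_filter hw ws.
    by rewrite e.
  move=> /dl_max [w0 w0N hmax].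
  move: (w0N); rewrite mem_filter => /andP[nz w0s].
  have : I (m * c w0).
    apply: add_gen_base; exists (iota m * f); first exact: Al.
    exists s, (fun w => m * c w), w0; split => //.
    - rewrite ef mulr_sumr; apply: eq_bigr => w' _.
      by rewrite mulrA -rmorphM.
    - split=> // w' w's w'w0 nz'; apply: hmax => //.
      by rewrite mem_filter nz' w's.
  move=> /(MI0 _ (Mright _ _ Mm)) e.
  by rewrite e eqxx in nz.
move=> r Mr.
have Msr := Mup r Mr.
have hd : forall f, A f -> iota (delta x r) * f = 0.
  move=> f Af.
  have e : iota (delta x r) = xv x * iota r - iota (sigma x r) * xv x.
    by rewrite hcomm addrC addKr.
  rewrite e mulrBl -!mulrA (kill r Mr f Af) (kill _ Msr _ (Al (xv x) f Af)).
  by rewrite mulr0 subrr.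
have hl : forall i, I i -> delta x r * i = 0.
  move=> i; elim => [{}a [f Af [s [c [w0 [us ef w0s ca _]]]]]| |a1 a2 _ IH1 _ IH2].
  - have := hd f Af; rewrite ef mulr_sumr.
    under eq_bigr => w _ do rewrite mulrA -rmorphM.
    move=> /(hfree.2 s (fun w => delta x r * c w) us) /(_ w0 w0s).
    by rewrite ca.
  - by rewrite mulr0.
  - by rewrite mulrBr IH1 IH2 subrr.
move=> i Ii; split; first exact: hl.
exact: (sp_lr hsp II hl).
Qed.
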